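(* Let $K$ be a skew field, $V$ a left (topological) $K$-vector space with basis $v^0,v^1,\ldots$, $V'$ the dual right $K$-vector space with basis $p_0,p_1,\ldots$, with pairing $(\cdot,\cdot)$; let $\mathbf f\in V$, $\mathbf g\in V'$, $y_i^k=(v^k,p_i)$, $f_i=(\mathbf f,p_i)$, $g^k=(v^k,\mathbf g)$, and assume $D=(y_i^k)$ generic. Then: (a) $(\Delta_R^m f)_{i_0\ldots i_m}^{k_0\ldots k_m}$ is symmetric with respect to $i_0,\ldots,i_m$ (invariant under any permutation of these indices) and with respect to $k_0,\ldots,k_{m-1}$. (b) $(\Delta_L^m g)_{i_0\ldots i_m}^{k_0\ldots k_m}$ is symmetric with respect to $k_0,\ldots,k_m$ and with respect to $i_0,\ldots,i_{m-1}$.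
   Context: The pairing $(\cdot,\cdot):V\times V'\to K$ is biadditive with $(\lambda v,p\mu)=\lambda(v,p)\mu$. $D$ is the infinite matrix with entry $y_i^k$ in row $k$, column $i$. Difference derivatives: for pairwise distinct $i_0,\ldots,i_m$ and pairwise distinct $k_0,\ldots,k_m$ (extended to permutations $i_0,i_1,\ldots$ and $k_0,k_1,\ldots$ of $\{0,1,\ldots\}$), for generic $D$ there are unique upper triangular $A=(a_m^j)$ and lower triangular $C=(c_l^m)$ such that $q_m=\sum_{j=0}^m p_{i_j}a_m^j$, $w^m=\sum_{l=0}^m c_l^m v^{k_l}$ satisfy $(w^m,q_{m'})=0$ for $m\ne m'$ and $(w^m,p_{i_m})=(v^{k_m},q_m)=1$ (equivalently, $q_m$ is the unique right combination of $p_{i_0},\ldots,p_{i_m}$ with $(v^{k_l},q_m)=\delta_{lm}$ for $l\le m$, and $w^m$ the unique left combination of $v^{k_0},\ldots,v^{k_m}$ with $(w^m,p_{i_j})=\delta_{jm}$ for $j\le m$). Define $(\Delta_R^m f)_{i_0\ldots i_m}^{k_0\ldots k_m}=\sum_j f_{i_j}a_m^j=(\mathbf f,q_m)$ and $(\Delta_L^m g)_{i_0\ldots i_m}^{k_0\ldots k_m}=\sum_l c_l^m g^{k_l}=(w^m,\mathbf g)$. Genericity means all finite square submatrices of $D$ that need to be inverted are invertible. *)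

(* Defs.v *)
From HB Require Import structures.
From mathcomp Require Import all_boot all_order fingroup perm all_algebra.
From Stdlib Require Import ClassicalEpsilon.
Set Implicit Arguments. Unset Strict Implicit. Unset Printing Implicit Defensive.
Import GRing.Theory.
Local Open Scope ring_scope.

Definition skew_field (K : unitRingType) : Prop :=
  forall x : K, x != 0 -> x \is a GRing.unit.

Definition invertible_mx (K : unitRingType) (n : nat) (A : 'M[K]_n) : Prop :=
  exists B : 'M[K]_n, A *m B = 1%:M /\ B *m A = 1%:M.

(* y k i = y_i^k = (v^k, p_i): entry of D in row k, column i.
   D is generic: every finite square submatrix (distinct rows, distinct columns)
   is invertible. *)
Definition generic (K : unitRingType) (y : nat -> nat -> K) : Prop :=
  forall (n : nat) (rows cols : 'I_n -> nat),
    injective rows -> injective cols ->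
    invertible_mx (\matrix_(a < n, b < n) y (rows a) (cols b)).

Definition subD (K : unitRingType) (y : nat -> nat -> K) (m : nat)
  (ii kk : 'I_m.+1 -> nat) : 'M[K]_m.+1 :=
  \matrix_(l < m.+1, j < m.+1) y (kk l) (ii j).

(* Coefficients a_m^j of q_m = sum_j p_{i_j} a_m^j, determined by
   (v^{k_l}, q_m) = sum_j y_{i_j}^{k_l} a_m^j = delta_{l m} for l <= m
   (the unique such column vector when D is generic). *)
Definition coefR (K : unitRingType) (y : nat -> nat -> K) (m : nat)
  (ii kk : 'I_m.+1 -> nat) : 'cV[K]_m.+1 :=
  epsilon (inhabits 0)
    (fun a : 'cV[K]_m.+1 => subD y ii kk *m a = delta_mx ord_max 0).

(* Coefficients c_l^m of w^m = sum_l c_l^m v^{k_l}, determined by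
   (w^m, p_{i_j}) = sum_l c_l^m y_{i_j}^{k_l} = delta_{j m} for j <= m. *)
Definition coefL (K : unitRingType) (y : nat -> nat -> K) (m : nat)
  (ii kk : 'I_m.+1 -> nat) : 'rV[K]_m.+1 :=
  epsilon (inhabits 0)
    (fun c : 'rV[K]_m.+1 => c *m subD y ii kk = delta_mx 0 ord_max).

Definition DeltaR (K : unitRingType) (y : nat -> nat -> K) (f : nat -> K) (m : nat)
  (ii kk : 'I_m.+1 -> nat) : K :=
  \sum_(j < m.+1) f (ii j) * coefR y ii kk j 0.

Definition DeltaL (K : unitRingType) (y : nat -> nat -> K) (g : nat -> K) (m : nat)
  (ii kk : 'I_m.+1 -> nat) : K :=
  \sum_(l < m.+1) coefL y ii kk 0 l * g (kk l).

(* Main.v *)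
Require Import Defs.
From mathcomp Require Import all_boot all_order fingroup perm all_algebra.
From Stdlib Require Import ClassicalEpsilon.
Local Open Scope ring_scope.
Import GRing.Theory.
Set Implicit Arguments.

Section Aux.
Variables (K : unitRingType) (y : nat -> nat -> K) (hD : generic y).

Lemma subD_inv m (ii kk : 'I_m.+1 -> nat) :
  injective ii -> injective kk -> invertible_mx (subD y ii kk).
Proof. move=> hi hk; exact: (@hD m.+1 kk ii hk hi). Qed.

Lemma coefR_spec m (ii kk : 'I_m.+1 -> nat) :
  injective ii -> injective kk ->
  subD y ii kk *m coefR y ii kk = delta_mx ord_max 0.
Proof.
move=> hi hk; rewrite /coefR.
apply: (epsilon_spec (inhabits 0) (fun a : 'cV[K]_m.+1 => subD y ii kk *m a = delta_mx ord_max 0)).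
have [B [h1 h2]] := subD_inv hi hk.
exists (B *m delta_mx ord_max 0); by rewrite mulmxA h1 mul1mx.
Qed.

Lemma coefR_uniq m (ii kk : 'I_m.+1 -> nat) a :
  injective ii -> injective kk ->
  subD y ii kk *m a = delta_mx ord_max 0 -> a = coefR y ii kk.
Proof.
move=> hi hk ha; have [B [h1 h2]] := subD_inv hi hk.
by rewrite -(mul1mx a) -h2 -mulmxA ha -(coefR_spec hi hk) mulmxA h2 mul1mx.
Qed.

Lemma coefL_spec m (ii kk : 'I_m.+1 -> nat) :
  injective ii -> injective kk ->
  coefL y ii kk *m subD y ii kk = delta_mx 0 ord_max.
Proof.
move=> hi hk; rewrite /coefL.
apply: (epsilon_spec (inhabits 0) (fun c : 'rV[K]_m.+1 => c *m subD y ii kk = delta_mx 0 ord_max)).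
have [B [h1 h2]] := subD_inv hi hk.
exists (delta_mx 0 ord_max *m B); by rewrite -mulmxA h2 mulmx1.
Qed.

Lemma coefL_uniq m (ii kk : 'I_m.+1 -> nat) c :
  injective ii -> injective kk ->
  c *m subD y ii kk = delta_mx 0 ord_max -> c = coefL y ii kk.
Proof.
move=> hi hk hc; have [B [h1 h2]] := subD_inv hi hk.
by rewrite -(mulmx1 c) -h1 mulmxA hc -(coefL_spec hi hk) -mulmxA h1 mulmx1.
Qed.
End Aux.

Theorem mainTheorem4 (K : unitRingType) (hK : skew_field K)
  (y : nat -> nat -> K) (f g : nat -> K) (hD : generic y)
  (m : nat) (ii kk : 'I_m.+1 -> nat)
  (hii : injective ii) (hkk : injective kk) :
  (* (a) *)
  ((forall s : 'S_m.+1, DeltaR y f (ii \o s) kk = DeltaR y f ii kk) /\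
   (forall t : 'S_m.+1, t ord_max = ord_max ->
      DeltaR y f ii (kk \o t) = DeltaR y f ii kk)) /\
  (* (b) *)
  ((forall t : 'S_m.+1, DeltaL y g ii (kk \o t) = DeltaL y g ii kk) /\
   (forall s : 'S_m.+1, s ord_max = ord_max ->
      DeltaL y g (ii \o s) kk = DeltaL y g ii kk)).
Proof.
split; split.
- move=> s; have his : injective (ii \o s) := inj_comp hii (@perm_inj _ s).
  rewrite /DeltaR; set a := coefR y ii kk.
  have -> : coefR y (ii \o s) kk = \col_j a (s j) 0.
    apply/esym/(coefR_uniq hD his hkk).
    apply/matrixP=> l z; rewrite (ord1 z) -(coefR_spec hD hii hkk) !mxE.
    rewrite [RHS](reindex_inj (@perm_inj _ s)) /=.
    by apply: eq_bigr => j _; rewrite !mxE.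
  rewrite [RHS](reindex_inj (@perm_inj _ s)) /=.
  by apply: eq_bigr => j _; rewrite !mxE.
- move=> t Ht; have hkt : injective (kk \o t) := inj_comp hkk (@perm_inj _ t).
  rewrite /DeltaR (coefR_uniq hD hii hkt (a := coefR y ii kk)) //.
  apply/matrixP=> l z; rewrite (ord1 z).
  have := congr1 (fun M : 'cV[K]_m.+1 => M (t l) 0) (coefR_spec hD hii hkk).
  rewrite !mxE -{1}Ht (inj_eq perm_inj) => <-.
  apply: eq_bigr => j _; by rewrite !mxE.
- move=> t; have hkt : injective (kk \o t) := inj_comp hkk (@perm_inj _ t).
  rewrite /DeltaL; set c := coefL y ii kk.
  have -> : coefL y ii (kk \o t) = \row_l c 0 (t l).
    apply/esym/(coefL_uniq hD hii hkt).
    apply/matrixP=> z j; rewrite (ord1 z) -(coefL_spec hD hii hkk) !mxE.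
    rewrite [RHS](reindex_inj (@perm_inj _ t)) /=.
    by apply: eq_bigr => l _; rewrite !mxE.
  rewrite [RHS](reindex_inj (@perm_inj _ t)) /=.
  by apply: eq_bigr => l _; rewrite !mxE.
- move=> s Hs; have his : injective (ii \o s) := inj_comp hii (@perm_inj _ s).
  rewrite /DeltaL (coefL_uniq hD his hkk (c := coefL y ii kk)) //.
  apply/matrixP=> z j; rewrite (ord1 z).
  have := congr1 (fun M : 'rV[K]_m.+1 => M 0 (s j)) (coefL_spec hD hii hkk).
  rewrite !mxE -{1}Hs (inj_eq perm_inj) => <-.
  apply: eq_bigr => l _; by rewrite !mxE.
Qed.
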